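(* Let $G$ be a graph with at least two vertices and let $u$ be a universal vertex of $G$. Then $\tilde\gamma_{gr}^{\times 2}(G)=\tilde\gamma_{gr}^{\times 2}(G-u)+a(G-u)$ (where, since $G$ has no isolated vertices, $\tilde\gamma_{gr}^{\times 2}(G)=\gamma_{gr}^{\times 2}(G)$). Moreover, if $a(G-u)=0$, every GDDS of $G-u$ is a GDDS of $G$; and if $a(G-u)=1$ and $S$ is an MDNS of $G-u$, then $S\oplus(u)$ is an MDNS of $G$.
   Context: Graphs are finite, simple, undirected; $N[v]$ is the closed neighborhood; $u$ is universal if $N[u]=V(G)$. A sequence $S=(v_1,\dots,v_k)$ of distinct vertices of $G$ is a double neighborhood sequence (DNS) if for each $i$ some $u\in N[v_i]$ satisfies $|\{j<i: u\in N[v_j]\}|\le 1$. A maximum double neighborhood sequence (MDNS) is a DNS of maximum length, and $\tilde\gamma_{gr}^{\times 2}(G)$ denotes this length. A double dominating sequence (DDS) is a DNS whose vertex set $D$ satisfies $|N[w]\cap D|\ge 2$ for all $w$; for graphs without isolated vertices a Grundy double dominating sequence (GDDS) is a DDS of maximum length, of length $\gamma_{gr}^{\times 2}(G)$. $a(G)=1$ if $G$ has an isolated vertex and $a(G)=0$ otherwise. $S\oplus(u)$ denotes the sequence $S$ followed by $u$. *)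

(* Defs.v *)
(* A graph is given by a vertex set V : {set T} over a finType T
   and a symmetric irreflexive edge relation e : rel T (edges outside V are ignored). *)
From mathcomp Require Import all_boot.
Set Implicit Arguments. Unset Strict Implicit. Unset Printing Implicit Defensive.

Section Graphs.
Variable T : finType.
Implicit Types (V : {set T}) (e : rel T) (s : seq T).

Definition cnbhd V e (v : T) : {set T} := [set w in V | (w == v) || e v w].

Definition universal V e (u : T) : bool := (u \in V) && (cnbhd V e u == V).

Definition del_vertex V (u : T) : {set T} := V :\ u.

Definition has_isolated V e : bool := [exists v in V, cnbhd V e v == [set v]].
Definition a_param V e : nat := has_isolated V e.

Definition is_DNS V e s : bool :=
  [&& uniq s, all (mem V) s &
   [forall i : 'I_(size s),
      [exists w in cnbhd V e (tnth (in_tuple s) i),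
         count (fun x => w \in cnbhd V e x) (take i s) <= 1]]].

Definition is_DDS V e s : bool :=
  is_DNS V e s && [forall w in V, 2 <= #|cnbhd V e w :&: [set x in s]|].

Definition is_MDNS V e s : Prop :=
  is_DNS V e s /\ forall t, is_DNS V e t -> size t <= size s.
Definition is_GDDS V e s : Prop :=
  is_DDS V e s /\ forall t, is_DDS V e t -> size t <= size s.

(* lengths (every such sequence has length <= #|V| <= #|T|) *)
Definition tgamma_gr2 V e : nat :=
  \max_(n < #|T|.+1 | [exists t : n.-tuple T, is_DNS V e t]) n.
Definition gamma_gr2 V e : nat :=
  \max_(n < #|T|.+1 | [exists t : n.-tuple T, is_DDS V e t]) n.

End Graphs.

(* Main.v *)
Require Import Defs.
From mathcomp Require Import all_boot.
From mathcomp Require Import zify.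
Set Implicit Arguments. Unset Strict Implicit. Unset Printing Implicit Defensive.

Section Gen.
Variables (T : finType) (e : rel T) (e_sym : symmetric e).
Implicit Types (W : {set T}) (s : seq T).

Lemma inN W x y : (y \in cnbhd W e x) = (y \in W) && ((y == x) || e x y).
Proof. by rewrite /cnbhd inE. Qed.

Lemma N_sym W x y : x \in W -> y \in W ->
  (y \in cnbhd W e x) = (x \in cnbhd W e y).
Proof. by move=> xW yW; rewrite !inN xW yW eq_sym e_sym. Qed.

Lemma DNS_nil W : is_DNS W e [::].
Proof. by rewrite /is_DNS /=; apply/forallP => [[]]. Qed.

Lemma DNS_P W s x0 : is_DNS W e s = [&& uniq s, all (mem W) s &
  [forall i : 'I_(size s), [exists w in cnbhd W e (nth x0 s i),
      count (fun y => w \in cnbhd W e y) (take i s) <= 1]]].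
Proof.
rewrite /is_DNS; congr [&& _, _ & _]; apply: eq_forallb => i.
by rewrite (tnth_nth x0).
Qed.

Lemma forall_ordS n (P : nat -> bool) :
  [forall i : 'I_n.+1, P i] = [forall i : 'I_n, P i] && P n.
Proof.
apply/forallP/andP => [H|[/forallP H Hn] i].
  split; last exact: (H ord_max).
  by apply/forallP => i; exact: (H (widen_ord (leqnSn n) i)).
case: (ltnP i n) => hi; first exact: (H (Ordinal hi)).
have -> : (i : nat) = n by apply/eqP; rewrite eqn_leq hi -ltnS ltn_ord.
done.
Qed.

Lemma DNS_rcons W s x : is_DNS W e (rcons s x) =
  [&& is_DNS W e s, x \notin s, x \in W &
      [exists w in cnbhd W e x, count (fun y => w \in cnbhd W e y) s <= 1]].
Proof.
rewrite (DNS_P _ _ x) (DNS_P _ s x) size_rcons.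
rewrite (@forall_ordS (size s) (fun i => [exists w in cnbhd W e (nth x (rcons s x) i),
      count (fun y => w \in cnbhd W e y) (take i (rcons s x)) <= 1])).
rewrite rcons_uniq all_rcons.
rewrite nth_rcons ltnn eqxx -cats1 take_size_cat //.
have -> : [forall i : 'I_(size s), [exists w in cnbhd W e (nth x (s ++ [:: x]) i),
      count (fun y => w \in cnbhd W e y) (take i (s ++ [:: x])) <= 1]] =
   [forall i : 'I_(size s), [exists w in cnbhd W e (nth x s i),
      count (fun y => w \in cnbhd W e y) (take i s) <= 1]].
  apply: eq_forallb => i; rewrite cats1 nth_rcons ltn_ord -cats1 takel_cat //.
  exact: ltnW.
set A := [forall _, _]; set B := [exists _ in _, _].
have -> : mem W x = (x \in W) by [].
set C := all (mem W) s; set D := uniq s; set E := x \in s; set F := x \in W.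
clearbody A B C D E F.
by case: A; case: B; case: C; case: D; case: E; case: F.
Qed.

Lemma DNS_uniq W s : is_DNS W e s -> uniq s.
Proof. by case/and3P. Qed.

Lemma DNS_all W s : is_DNS W e s -> all (mem W) s.
Proof. by case/and3P. Qed.

Lemma size_uniq (s : seq T) : uniq s -> size s <= #|T|.
Proof. by move/card_uniqP <-; exact: max_card. Qed.

Lemma count_card W s w : uniq s -> all (mem W) s -> w \in W ->
  count (fun y => w \in cnbhd W e y) s = #|cnbhd W e w :&: [set x in s]|.
Proof.
move=> us /allP aW wW.
rewrite -size_filter -(card_uniqP _) ?filter_uniq //.
apply: eq_card => y; rewrite mem_filter !inE.
case ys: (y \in s); last by rewrite !andbF.
have yW : y \in W by exact: aW.
by rewrite wW yW eq_sym e_sym.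
Qed.

Lemma extend W s w : is_DNS W e s -> w \in W -> 1 < #|cnbhd W e w| ->
  #|cnbhd W e w :&: [set x in s]| <= 1 -> exists x, is_DNS W e (rcons s x).
Proof.
move=> Ds wW c2 c1.
have [x xN xs] : exists2 x, x \in cnbhd W e w & x \notin [set x in s].
  apply/subsetPn; apply/negP => sub; move: c1; rewrite (setIidPl sub); lia.
have xW : x \in W by move: xN; rewrite inN => /andP[].
exists x; rewrite DNS_rcons Ds xW.
move: xs; rewrite inE => -> /=.
apply/exists_inP; exists w; first by rewrite N_sym.
by rewrite count_card // ?(DNS_uniq Ds) ?(DNS_all Ds).
Qed.

Lemma grow W s : (forall w, w \in W -> 1 < #|cnbhd W e w|) -> is_DNS W e s ->
  exists t, is_DDS W e t /\ size s <= size t.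
Proof.
move=> noiso.
have : #|T| - size s <= #|T| - size s by [].
move: {2}(#|T| - size s) => k; elim: k s => [|k IH] s hk Ds.
  case D: (is_DDS W e s); first by exists s.
  move: D; rewrite /is_DDS Ds /= => /forall_inPn [w wW c].
  move: c; rewrite -leqNgt => c; have [x Dx] := extend Ds wW (noiso _ wW) c.
  have := size_uniq (DNS_uniq Dx); rewrite size_rcons; lia.
case D: (is_DDS W e s); first by exists s.
move: D; rewrite /is_DDS Ds /= => /forall_inPn [w wW c].
move: c; rewrite -leqNgt => c; have [x Dx] := extend Ds wW (noiso _ wW) c.
have hk' : #|T| - size (rcons s x) <= k.
  have := size_uniq (DNS_uniq Dx); rewrite size_rcons; lia.
have [t [Dt st]] := IH _ hk' Dx.
exists t; split => //; move: st; rewrite size_rcons; lia.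
Qed.

Lemma tgamma_char W s : is_MDNS W e s -> tgamma_gr2 W e = size s.
Proof.
case=> Ds Hm.
have sT : size s < #|T|.+1 by rewrite ltnS size_uniq // (DNS_uniq Ds).
apply/eqP; rewrite eqn_leq; apply/andP; split.
  apply/bigmax_leqP => i /existsP [t Dt].
  by have := Hm t Dt; rewrite size_tuple.
apply: (@leq_bigmax_cond _ _ _ (Ordinal sT)) => /=.
by apply/existsP; exists (in_tuple s).
Qed.

Lemma gamma_char W s : is_GDDS W e s -> gamma_gr2 W e = size s.
Proof.
case=> Ds Hm.
have sT : size s < #|T|.+1.
  by rewrite ltnS size_uniq // (DNS_uniq (andP Ds).1).
apply/eqP; rewrite eqn_leq; apply/andP; split.
  apply/bigmax_leqP => i /existsP [t Dt].
  by have := Hm t Dt; rewrite size_tuple.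
apply: (@leq_bigmax_cond _ _ _ (Ordinal sT)) => /=.
by apply/existsP; exists (in_tuple s).
Qed.

Lemma exists_MDNS W : exists s, is_MDNS W e s.
Proof.
have ex : exists n, (fun n => [exists t : n.-tuple T, is_DNS W e t]) n.
  by exists 0; apply/existsP; exists [tuple]; exact: DNS_nil.
have bnd : forall n, (fun n => [exists t : n.-tuple T, is_DNS W e t]) n -> n <= #|T|.
  by move=> n /existsP [t Dt]; rewrite -(size_tuple t) size_uniq // (DNS_uniq Dt).
case: (ex_maxnP ex bnd) => n /existsP [t Dt] Hm.
exists t; split => // t' Dt'.
by rewrite size_tuple; apply: Hm; apply/existsP; exists (in_tuple t').
Qed.

End Gen.

Section Spec.
Variables (T : finType) (V : {set T}) (e : rel T) (e_sym : symmetric e) (u : T)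
  (hu : universal V e u).
Implicit Types (s t : seq T).
Notation V' := (V :\ u).

Lemma uV : u \in V. Proof. by case/andP: hu. Qed.

Lemma F1 w x : w != u -> (w \in cnbhd V' e x) = (w \in cnbhd V e x).
Proof. by move=> wu; rewrite !inN in_setD1 wu. Qed.

Lemma F3 : cnbhd V e u = V.
Proof. by case/andP: hu => _ /eqP. Qed.

Lemma F2 x : x \in V -> u \in cnbhd V e x.
Proof.
move=> xV; rewrite N_sym // ?uV // F3 //.
Qed.

Lemma cnt_all s : all (mem V) s -> count (fun y => u \in cnbhd V e y) s = size s.
Proof.
move=> /allP aV; rewrite -count_predT; apply: eq_in_count => y ys.
by rewrite F2 //; exact: aV.
Qed.

Lemma LA s : is_DNS V' e s -> is_DNS V e s.
Proof.
elim/last_ind: s => [|s x IH]; first by move=> _; exact: DNS_nil.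
rewrite !DNS_rcons => /and4P [Ds xs xV' /exists_inP [w wN c]].
rewrite IH // xs /=.
move: xV'; rewrite in_setD1 => /andP [_ ->] /=.
have wu : w != u by move: wN; rewrite inN in_setD1 => /andP [/andP [] ].
apply/exists_inP; exists w; first by rewrite -F1.
by rewrite -(eq_count (fun y => F1 y wu)).
Qed.

Lemma LC s : is_DNS V e s -> is_DNS V' e (filter (predC1 u) s).
Proof.
elim/last_ind: s => [|s x IH]; first by move=> _; exact: DNS_nil.
rewrite DNS_rcons filter_rcons => /and4P [Ds xs xV /exists_inP [w wN c]].
case: (eqVneq x u) => [xu|xu] /=; first by subst x; rewrite eqxx /=; exact: IH.
rewrite xu DNS_rcons IH // mem_filter negb_and xs orbT in_setD1 xu xV /=.
case: (eqVneq w u) => [wu|wu].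
  subst w; move: c; rewrite cnt_all ?(DNS_all Ds) // => c.
  apply/exists_inP; exists x; first by rewrite inN in_setD1 xu xV eqxx.
  apply: leq_trans (count_size _ _) _; rewrite size_filter.
  exact: leq_trans (count_size _ _) c.
apply/exists_inP; exists w; first by rewrite F1.
rewrite (eq_count (fun y => F1 y wu)) count_filter.
apply: leq_trans c; apply: sub_count => y /andP [].
done.
Qed.

Lemma cnt_split (f : pred T) s : f u ->
  count f s = count f (filter (predC1 u) s) + count (pred1 u) s.
Proof.
move=> fu; elim: s => [|x s IH] //=.
case: (eqVneq x u) => [->|xu] /=; rewrite IH.
  rewrite fu /=; lia.
by rewrite addnA.
Qed.

Lemma LD s : is_DNS V e s -> u \in s -> forall v, v \in V' ->
  exists2 w, w \in V' & count (fun y => w \in cnbhd V' e y) (filter (predC1 u) s) <= 1.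
Proof.
case/lastP: s => [|s0 z] //.
move=> D us v vV'; move: (D); rewrite DNS_rcons => /and4P [Ds zs zV /exists_inP [w wN c]].
have cu : 0 < count (pred1 u) (rcons s0 z) by rewrite -has_count has_pred1.
have hs := @cnt_split predT (rcons s0 z) isT.
rewrite !count_predT size_filter in hs.
case: (eqVneq w u) => [wu|wu].
  subst w; move: c; rewrite cnt_all ?(DNS_all Ds) // => c.
  exists v => //; apply: leq_trans (count_size _ _) _.
  rewrite size_filter; move: hs; rewrite size_rcons. lia.
have wV' : w \in V' by rewrite in_setD1 wu; move: wN; rewrite inN => /andP [].
exists w => //.
rewrite (eq_count (fun y => F1 y wu)).
have fu : (fun y => w \in cnbhd V e y) u by rewrite /= F3; move: wV'; rewrite in_setD1 => /andP [].
have := @cnt_split (fun y => w \in cnbhd V e y) (rcons s0 z) fu.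
rewrite -cats1 count_cat /= addn0 cats1.
have : (w \in cnbhd V e z) <= 1 by case: (w \in _).
move: (count (fun y => w \in cnbhd V e y) s0) c => a ca.
move: (count_mem u (rcons s0 z)) cu => k ck.
lia.
Qed.


Lemma subN w : cnbhd V' e w \subset cnbhd V e w.
Proof. by apply/subsetP => y; rewrite !inN in_setD1 => /andP [/andP [_ ->] ->]. Qed.

Lemma size_filt t : uniq t ->
  size t = size (filter (predC1 u) t) + (u \in t).
Proof.
move=> ut; have := @cnt_split predT t isT.
by rewrite !count_predT size_filter count_uniq_mem.
Qed.

Lemma LK : (forall w, w \in V' -> 1 < #|cnbhd V' e w|) -> forall v, v \in V' ->
  forall t, is_DNS V e t -> exists t', is_DNS V' e t' /\ size t <= size t'.
Proof.
move=> noiso v vV' t Dt.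
have Dt' := LC Dt.
rewrite (size_filt (DNS_uniq Dt)).
case ut: (u \in t); last by exists (filter (predC1 u) t); rewrite addn0.
have [w wV' cw] := LD Dt ut vV'.
rewrite (count_card e_sym (DNS_uniq Dt') (DNS_all Dt') wV') in cw.
have [x Dx] := extend e_sym Dt' wV' (noiso w wV') cw.
by exists (rcons (filter (predC1 u) t) x); rewrite size_rcons addn1.
Qed.

Lemma Liso z : z \in V' -> cnbhd V' e z = [set z] ->
  forall S, is_MDNS V' e S -> is_MDNS V e (rcons S u).
Proof.
move=> zV' hz S [DS HS]; split.
  rewrite DNS_rcons LA // uV /=.
  apply/andP; split.
    apply/negP => uS; have := allP (DNS_all DS) u uS.
    by rewrite /= in_setD1 eqxx.
  have zu : z != u by move: zV'; rewrite in_setD1 => /andP [].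
  apply/exists_inP; exists z; first by rewrite F3; move: zV'; rewrite in_setD1 => /andP [].
  rewrite -(eq_count (fun y => F1 y zu)).
  have -> : count (fun y => z \in cnbhd V' e y) S = count (pred1 z) S.
    apply: eq_in_count => y yS.
    have yV' : y \in V' := allP (DNS_all DS) y yS.
    by rewrite /= N_sym // hz in_set1.
  by rewrite count_uniq_mem ?(DNS_uniq DS) //; case: (z \in S).
move=> t Dt; have := HS _ (LC Dt).
rewrite (size_filt (DNS_uniq Dt)) size_rcons; case: (u \in t) => /=; lia.
Qed.

End Spec.

Theorem proposition4 (T : finType) (V : {set T}) (e : rel T)
  (e_sym : symmetric e) (e_irr : irreflexive e)
  (hV : 2 <= #|V|) (u : T) (hu : universal V e u) :
  [/\ tgamma_gr2 V e = tgamma_gr2 (del_vertex V u) e + a_param (del_vertex V u) e,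
      tgamma_gr2 V e = gamma_gr2 V e,
      (a_param (del_vertex V u) e = 0 ->
         forall s, is_GDDS (del_vertex V u) e s -> is_GDDS V e s) &
      (a_param (del_vertex V u) e = 1 ->
         forall s, is_MDNS (del_vertex V u) e s -> is_MDNS V e (rcons s u))].
Proof.
rewrite /del_vertex.
have [v vV'] : exists v, v \in V :\ u.
  case/card_gt1P: hV => x [y [xV yV xy]].
  case: (eqVneq x u) => [xu|xu].
    by exists y; rewrite in_setD1 yV andbT; subst x; rewrite eq_sym.
  by exists x; rewrite in_setD1 xV xu.
have noisoG : forall w, w \in V -> 1 < #|cnbhd V e w|.
  move=> w wV; case: (eqVneq w u) => [->|wu]; first by rewrite F3.
  apply/card_gt1P; exists w, u; split => //.
  - by rewrite inN wV eqxx.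
  - exact: F2.
have part2 : tgamma_gr2 V e = gamma_gr2 V e.
  have [M [DM HM]] := exists_MDNS e V.
  have [t [Dt st]] := grow e_sym noisoG DM.
  have ts : size t <= size M := HM t (andP Dt).1.
  rewrite (tgamma_char (conj DM HM)).
  have -> : gamma_gr2 V e = size t.
    apply: gamma_char; split => // t' Dt'.
    exact: leq_trans (HM t' (andP Dt').1) st.
  by apply/eqP; rewrite eqn_leq st ts.
have [S MS] := exists_MDNS e (V :\ u).
rewrite /a_param; case hiso: (has_isolated (V :\ u) e).
  move: (hiso) => /exists_inP [z zV' /eqP hz].
  have MSG := Liso e_sym hu zV' hz MS.
  split => //.
  by rewrite (tgamma_char MSG) (tgamma_char MS) size_rcons addn1.
  by move=> _ s; exact: (Liso e_sym hu zV' hz).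
have noiso' : forall w, w \in V :\ u -> 1 < #|cnbhd (V :\ u) e w|.
  move=> w wV'; rewrite ltnNge; apply/negP => c.
  have wN : w \in cnbhd (V :\ u) e w by rewrite inN wV' eqxx.
  have c1 : #|cnbhd (V :\ u) e w| == 1.
    by rewrite eqn_leq c /=; apply/card_gt0P; exists w.
  case/cards1P: c1 => x hx.
  move: wN; rewrite hx in_set1 => /eqP wx; subst x.
  move: hiso => /negbT /exists_inP; apply; exists w => //.
  by rewrite hx.
have MSG : is_MDNS V e S.
  case: MS => DS HS; split; first exact: (LA DS).
  move=> t Dt; have [t' [Dt' st']] := LK e_sym hu noiso' vV' Dt.
  exact: leq_trans st' (HS _ Dt').
split => //.
- by rewrite (tgamma_char MSG) (tgamma_char MS) addn0.
- move=> _ s [Ds Hm]; case/andP: (Ds) => DNSs Dom; split.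
    apply/andP; split; first exact: (LA DNSs).
    apply/forall_inP => w wV; case: (eqVneq w u) => [->|wu].
      rewrite F3 //; have := forall_inP Dom v vV'.
      move=> h; apply: leq_trans h _; apply: subset_leq_card; apply: setSI.
      by apply/subsetP => y; rewrite inN in_setD1 => /andP [/andP [_ ->]].
    have wV' : w \in V :\ u by rewrite in_setD1 wu.
    apply: leq_trans (forall_inP Dom w wV') _.
    by apply: subset_leq_card; apply: setSI; exact: subN.
  move=> t Dt.
  have [t' [Dt' st']] := LK e_sym hu noiso' vV' (andP Dt).1.
  have [t'' [Dt'' st'']] := grow e_sym noiso' Dt'.
  exact: leq_trans st' (leq_trans st'' (Hm _ Dt'')).

Qed.
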